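(* Let $\varphi(x)$ be a first-order formula of quantifier rank at most $q$ over a finite modal signature, and suppose $\varphi$ is invariant under graded bisimulation $\sim_{\mathrm{C}}$ on the class of all pointed Kripke structures (respectively, on the class of all finite pointed Kripke structures). Let $\ell=2^q-1$. Then for every pointed Kripke structure (respectively, every finite pointed Kripke structure) $\mathcal{M},w$ such that $\mathcal{M}\restriction N^\ell(w),w$ is rooted tree-like, we have $$\mathcal{M}\models\varphi[w]\iff \mathcal{M}\restriction N^\ell(w)\models\varphi[w].$$
   Context: A finite modal signature consists of a finite set $I$ of agents and a finite set $J$ of basic propositions. A Kripke structure is $\mathcal{M}=(W,(E_i)_{i\in I},(P_j)_{j\in J})$ with $W\neq\emptyset$, $E_i\subseteq W\times W$, $P_j\subseteq W$, viewed as a relational structure with binary relations $E_i$ and unary relations $P_j$; a pointed Kripke structure $\mathcal{M},w$ has a distinguished world $w$, and $\varphi(x)$ is evaluated by assigning $w$ to $x$. $E_i[u]=\{v:(u,v)\in E_i\}$. A graded bisimulation between $\mathcal{M}$ and $\mathcal{M}'=(W',(E'_i),(P'_j))$ is a non-empty relation $Z\subseteq W\times W'$ such that for all $(u,u')\in Z$: (atom equivalence) $u\in P_j\iff u'\in P'_j$ for all $j$; (graded forth) for every $i$ and $k\ge1$ and pairwise distinct $v_1,\dots,v_k\in E_i[u]$ there are pairwise distinct $v'_1,\dots,v'_k\in E'_i[u']$ with $(v_m,v'_m)\in Z$ for all $m$; (graded back) symmetrically. $\mathcal{M},w\sim_{\mathrm{C}}\mathcal{M}',w'$ if such $Z$ exists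 with $(w,w')\in Z$. The $\ell$-neighbourhood $N^\ell(w)$ of $w$ is the set of worlds at distance at most $\ell$ from $w$ in the undirected graph on $W$ whose edges are given by the union of the symmetrisations of all $E_i$; $\mathcal{M}\restriction N^\ell(w)$ is the induced substructure on $N^\ell(w)$. $\mathcal{M}\restriction N^\ell(w),w$ is rooted tree-like (equivalently, $\mathcal{M},w$ is rooted tree-like to depth $\ell$) if, within $N^\ell(w)$, the symmetrisations of the $E_i$ are pairwise disjoint, their union is acyclic (so it forms an undirected tree with root $w$), and every $E_i$-edge within $N^\ell(w)$ is directed away from the root $w$. *)

(* Defs.v *)
From Stdlib Require Import List Arith.
Import ListNotations.

Set Implicit Arguments.

Section Modal.
Variables (I J : Type).

Definition finite_type (T : Type) : Prop := exists l : list T, forall x : T, In x l.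

(** Kripke structures (W nonempty is ensured by the distinguished world). *)
Record Kripke := {
  world : Type;
  rel : I -> world -> world -> Prop;
  prop : J -> world -> Prop
}.

Definition finite_kripke (M : Kripke) : Prop := finite_type (world M).

Inductive form :=
| FRel  : I -> nat -> nat -> form
| FProp : J -> nat -> form
| FEq   : nat -> nat -> form
| FFalse : form
| FNot  : form -> form
| FAnd  : form -> form -> form
| FOr   : form -> form -> form
| FImp  : form -> form -> form
| FEx   : nat -> form -> form
| FAll  : nat -> form -> form.

Fixpoint qrank (f : form) : nat :=
  match f with
  | FRel _ _ _ | FProp _ _ | FEq _ _ | FFalse => 0
  | FNot g => qrank g
  | FAnd g h | FOr g h | FImp g h => Nat.max (qrank g) (qrank h)
  | FEx _ g | FAll _ g => S (qrank g)
  end.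

Fixpoint free_in (f : form) (y : nat) : Prop :=
  match f with
  | FRel _ a b => y = a \/ y = b
  | FProp _ a => y = a
  | FEq a b => y = a \/ y = b
  | FFalse => False
  | FNot g => free_in g y
  | FAnd g h | FOr g h | FImp g h => free_in g y \/ free_in h y
  | FEx x g | FAll x g => y <> x /\ free_in g y
  end.

Definition upd {W : Type} (e : nat -> W) (x : nat) (v : W) : nat -> W :=
  fun y => if Nat.eqb y x then v else e y.

Fixpoint holds (M : Kripke) (e : nat -> world M) (f : form) : Prop :=
  match f with
  | FRel i a b => rel M i (e a) (e b)
  | FProp j a => prop M j (e a)
  | FEq a b => e a = e b
  | FFalse => False
  | FNot g => ~ holds M e g
  | FAnd g h => holds M e g /\ holds M e h
  | FOr g h => holds M e g \/ holds M e h
  | FImp g h => holds M e g -> holds M e h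
  | FEx x g => exists v, holds M (upd e x v) g
  | FAll x g => forall v, holds M (upd e x v) g
  end.

(** The formula phi(x) has x = variable 0; M |= phi[w] assigns w to x
    (other variables get w too, irrelevant when phi has only x free). *)
Definition sat (M : Kripke) (f : form) (w : world M) : Prop :=
  holds M (fun _ => w) f.

Definition graded_bisim (M M' : Kripke) (Z : world M -> world M' -> Prop) : Prop :=
  (exists u u', Z u u') /\
  forall u u', Z u u' ->
    (forall j, prop M j u <-> prop M' j u') /\
    (forall i (vs : list (world M)), 1 <= length vs -> NoDup vs ->
        Forall (rel M i u) vs ->
        exists vs' : list (world M'), NoDup vs' /\ Forall (rel M' i u') vs' /\
                                      Forall2 Z vs vs') /\
    (forall i (vs' : list (world M')), 1 <= length vs' -> NoDup vs' ->
        Forall (rel M' i u') vs' ->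
        exists vs : list (world M), NoDup vs /\ Forall (rel M i u) vs /\
                                    Forall2 Z vs vs').

Definition gbisimilar (M : Kripke) (w : world M) (M' : Kripke) (w' : world M') : Prop :=
  exists Z, graded_bisim M M' Z /\ Z w w'.

Definition adj (M : Kripke) (u v : world M) : Prop :=
  exists i, rel M i u v \/ rel M i v u.

Inductive reach (M : Kripke) (w : world M) : nat -> world M -> Prop :=
| reach0 : forall n, reach M w n w
| reachS : forall n u v, reach M w n u -> adj M u v -> reach M w (S n) v.

Definition dist_eq (M : Kripke) (w : world M) (n : nat) (v : world M) : Prop :=
  reach M w n v /\ forall m, m < n -> ~ reach M w m v.

Definition restrict (M : Kripke) (w : world M) (l : nat) : Kripke :=
  {| world := { v : world M | reach M w l v };
     rel := fun i a b => rel M i (proj1_sig a) (proj1_sig b);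
     prop := fun j a => prop M j (proj1_sig a) |}.

Definition restrict_root (M : Kripke) (w : world M) (l : nat) : world (restrict M w l) :=
  exist _ w (reach0 M w l).

Fixpoint chain (M : Kripke) (l : list (world M)) : Prop :=
  match l with
  | a :: ((b :: _) as t) => adj M a b /\ chain M t
  | _ => True
  end.

Definition tree_like (M : Kripke) (w : world M) (l : nat) : Prop :=
  let N := reach M w l in
  (forall i i' u v, i <> i' -> N u -> N v ->
      ~ ((rel M i u v \/ rel M i v u) /\ (rel M i' u v \/ rel M i' v u))) /\
  (* the union of the symmetrisations is acyclic within N: no loops ... *)
  (forall u, N u -> ~ adj M u u) /\
  (* ... and no cycles of length >= 3 through distinct vertices *)
  (forall (v0 : world M) (rest : list (world M)),
      Forall N (v0 :: rest) -> NoDup (v0 :: rest) -> 2 <= length rest ->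
      chain M (v0 :: rest) -> ~ adj M (last rest v0) v0) /\
  (forall i u v, N u -> N v -> rel M i u v ->
      exists n, dist_eq M w n u /\ dist_eq M w (S n) v).

End Modal.

Arguments restrict {I J} M w l.
Arguments restrict_root {I J} M w l.

(* Main.v *)
Require Import Defs.
From Stdlib Require Import List Arith Lia Classical.
Import ListNotations.

Section Gen.
Context {I J : Type}.

Lemma adj_sym (K : Kripke I J) u v : adj K u v -> adj K v u.
Proof. intros [i [H|H]]; exists i; tauto. Qed.

Lemma reach_mono (K : Kripke I J) x a y : reach K x a y -> forall b, a <= b -> reach K x b y.
Proof.
  induction 1; intros b Hb. constructor.
  destruct b as [|b]; [lia|]. eapply reachS; [apply IHreach; lia| eauto].
Qed.

Lemma reach_trans (K : Kripke I J) x a y b z :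
  reach K x a y -> reach K y b z -> reach K x (a+b) z.
Proof.
  intros H1 H2; induction H2.
  - eapply reach_mono; eauto; lia.
  - rewrite Nat.add_succ_r. eapply reachS; eauto.
Qed.

Lemma reach_sym (K : Kripke I J) x a y : reach K x a y -> reach K y a x.
Proof.
  induction 1. constructor.
  assert (reach K v 1 u) by (eapply reachS; [constructor| apply adj_sym; auto]).
  exact (reach_trans _ _ _ _ _ _ H1 IHreach).
Qed.

Lemma transfer {A B : Type} (Z : A -> B -> Prop) (P : A -> Prop) (Q : B -> Prop) :
  (forall a, P a -> exists b, Q b /\ Z a b) -> (forall a a' b, Z a b -> Z a' b -> a = a') ->
  forall l, NoDup l -> Forall P l -> exists l', NoDup l' /\ Forall Q l' /\ Forall2 Z l l'.
Proof.
  intros Hex Hinj l; induction l as [|a l IH]; intros Hnd Hf.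
  - exists []; repeat constructor.
  - inversion Hnd; subst. inversion Hf; subst.
    destruct (IH H2 H4) as [l' [N1 [F1 F2]]].
    destruct (Hex a H3) as [b [Qb Zb]].
    exists (b :: l'); split; [|split; constructor; auto].
    constructor; auto. intro Hin.
    assert (exists a', In a' l /\ Z a' b).
    { clear - F2 Hin. induction F2; simpl in *. contradiction.
      destruct Hin as [<-|Hin]; [exists x; auto|]. destruct (IHF2 Hin) as [a' [? ?]]; eauto. }
    destruct H as [a' [Ha' Za']]. rewrite (Hinj _ _ _ Zb Za') in H1. contradiction.
Qed.

Lemma Forall2_flip {A B : Type} (Z : A -> B -> Prop) l l' :
  Forall2 (fun b a => Z a b) l' l -> Forall2 Z l l'.
Proof. induction 1; constructor; auto. Qed.

Lemma fin_sig {T : Type} (P : T -> Prop) :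
  (exists l, forall x, P x -> In x l) -> finite_type {x | P x}.
Proof.
  intros [l Hl].
  assert (G : forall l, exists l' : list {x | P x}, forall y, In (proj1_sig y) l -> In y l').
  { induction l0 as [|x l0 [l' IH]]. exists []; simpl; tauto.
    destruct (classic (P x)) as [p|np].
    - exists (exist _ x p :: l'). intros [y py] [E|E]; simpl in *.
      + subst; left; f_equal; apply proof_irrelevance.
      + right; apply (IH (exist _ y py)); auto.
    - exists l'. intros [y py] [E|E]; simpl in *. subst; contradiction.
      apply (IH (exist _ y py)); auto. }
  destruct (G l) as [l' Hl']. exists l'. intros y. apply Hl'. apply Hl, proj2_sig.
Qed.

End Gen.

Section Constr.
Context {I J : Type} (M : Kripke I J) (w : world M) (q : nat).

Definition Tag := option (bool * nat).
Definition okt (t : Tag) : Prop := match t with None => True | Some (_, i) => i <= q end.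
Definition Kb (b0 : bool) (t : Tag) : bool := match t with None => b0 | Some (b, _) => b end.
Definition valid (b0 : bool) (t : Tag) (x : world M) : Prop :=
  okt t /\ (Kb b0 t = true \/ reach M w (2^q - 1) x).
Definition UW (b0 : bool) := { p : Tag * world M | valid b0 (fst p) (snd p) }.
Definition U (b0 : bool) : Kripke I J :=
  {| world := UW b0;
     rel := fun i a b => fst (proj1_sig a) = fst (proj1_sig b) /\
                         rel M i (snd (proj1_sig a)) (snd (proj1_sig b));
     prop := fun j a => prop M j (snd (proj1_sig a)) |}.

Notation tg a := (fst (proj1_sig a)).
Notation vv a := (snd (proj1_sig a)).

Inductive reachP (P : world M -> Prop) (u : world M) : nat -> world M -> Prop :=
| rP0 : forall n, P u -> reachP P u n u
| rPS : forall n x y, reachP P u n x -> adj M x y -> P y -> reachP P u (S n) y.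

Lemma reachP_reach P u d v : reachP P u d v -> reach M u d v.
Proof. induction 1; [constructor | eapply reachS; eauto]. Qed.
Lemma reachP_end P u d v : reachP P u d v -> P v.
Proof. induction 1; auto. Qed.
Lemma reachP_weak (P Q : world M -> Prop) u d v :
  (forall x, P x -> Q x) -> reachP P u d v -> reachP Q u d v.
Proof. intros H; induction 1; [constructor | eapply rPS]; eauto. Qed.
Lemma reach_reachP_all (P : world M -> Prop) u d v :
  (forall x, P x) -> reach M u d v -> reachP P u d v.
Proof. intros H; induction 1; [constructor | eapply rPS]; eauto. Qed.
Lemma reach_deep a u d v : reach M w a u -> reach M u d v -> a + d <= 2^q - 1 ->
  reachP (reach M w (2^q - 1)) u d v.
Proof.
  intros Hw H; induction H; intros Hle.
  - constructor. eapply reach_mono; eauto; lia.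
  - eapply rPS; [apply IHreach; lia| auto|].
    eapply reach_mono; [eapply reach_trans; [exact Hw| eapply reachS; [exact H|exact H0]]|lia].
Qed.

Lemma adjU_tag b0 (a a' : UW b0) : adj (U b0) a a' -> tg a = tg a'.
Proof. intros [i [[H _]|[H _]]]; auto. Qed.
Lemma adjU_adj b0 (a a' : UW b0) : adj (U b0) a a' -> adj M (vv a) (vv a').
Proof. intros [i [[_ H]|[_ H]]]; exists i; auto. Qed.

Lemma reachU_tag b0 (a a' : UW b0) d : reach (U b0) a d a' -> tg a = tg a'.
Proof. induction 1; auto. rewrite IHreach. apply adjU_tag; auto. Qed.

Lemma reachU_P b0 (a a' : UW b0) d : reach (U b0) a d a' -> reachP (valid b0 (tg a)) (vv a) d (vv a').
Proof.
  induction 1. constructor. apply (proj2_sig a).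
  eapply rPS; eauto. apply adjU_adj; auto.
  rewrite (reachU_tag _ _ _ _ H), (adjU_tag _ _ _ H0). apply (proj2_sig v).
Qed.

Lemma reachP_U b0 s u d v : reachP (valid b0 s) u d v ->
  forall (pu : valid b0 s u) (pv : valid b0 s v),
  reach (U b0) (exist _ (s,u) pu : UW b0) d (exist _ (s,v) pv : UW b0).
Proof.
  induction 1; intros pu pv.
  - rewrite (proof_irrelevance _ pu pv). constructor.
  - eapply reachS. apply (IHreachP pu (reachP_end _ _ _ _ H)).
    destruct H0 as [i Hi]; exists i; simpl; tauto.
Qed.

Lemma reachP_U' b0 (a : UW b0) d v (pv : valid b0 (tg a) v) :
  reachP (valid b0 (tg a)) (vv a) d v -> reach (U b0) a d (exist _ (tg a, v) pv : UW b0).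
Proof. destruct a as [[s u] pu]; simpl; intros H; apply reachP_U; auto. Qed.

Lemma UW_eq b0 (a a' : UW b0) : tg a = tg a' -> vv a = vv a' -> a = a'.
Proof.
  destruct a as [[s u] pu], a' as [[s' u'] pu']; simpl; intros -> ->.
  f_equal; apply proof_irrelevance.
Qed.

Definition Inv (b1 b2 : bool) (k : nat) (e1 : nat -> UW b1) (e2 : nat -> UW b2) : Prop :=
 (forall n, vv (e1 n) = vv (e2 n)) /\
 (forall n, Kb b1 (tg (e1 n)) = Kb b2 (tg (e2 n)) \/ reach M w (2^q - 2^k) (vv (e1 n))) /\
 (forall n m, reach (U b1) (e1 n) (2^k) (e1 m) -> tg (e2 n) = tg (e2 m)) /\
 (forall n m, reach (U b2) (e2 n) (2^k) (e2 m) -> tg (e1 n) = tg (e1 m)) /\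
 (exists L1 L2, length L1 <= q - k + 1 /\ length L2 <= q - k + 1 /\
    forall n, In (tg (e1 n)) L1 /\ In (tg (e2 n)) L2).

Lemma Inv_sym b1 b2 k e1 e2 : Inv b1 b2 k e1 e2 -> Inv b2 b1 k e2 e1.
Proof.
  intros [H1 [H2 [H3 [H4 [L1 [L2 [A [B C]]]]]]]].
  split; [intros; auto|]. split; [intros n; rewrite <- H1; destruct (H2 n); auto|].
  split; auto. split; auto. exists L2, L1; split; auto; split; auto. intros n; split; apply C.
Qed.

Lemma upd_eq {W} (e : nat -> W) x v : upd e x v x = v.
Proof. unfold upd; rewrite Nat.eqb_refl; auto. Qed.
Lemma upd_neq {W} (e : nat -> W) x v n : n <> x -> upd e x v n = e n.
Proof. unfold upd; intros H; destruct (Nat.eqb_spec n x); congruence. Qed.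

Lemma pow_facts k : S k <= q -> 2^(S k) = 2^k + 2^k /\ 1 <= 2^k /\ 2^(S k) <= 2^q.
Proof.
  intros H. split. rewrite Nat.pow_succ_r'; lia. split. pose proof (Nat.pow_nonzero 2 k); lia.
  apply Nat.pow_le_mono_r; lia.
Qed.

Lemma fresh (L : list Tag) b : length L <= q -> exists i, i <= q /\ ~ In (Some (b,i)) L.
Proof.
  intros HL. apply NNPP; intro Hn.
  assert (incl (map (fun i => Some (b,i)) (seq 0 (S q))) L).
  { intros t Ht. apply in_map_iff in Ht. destruct Ht as [i [<- Hi]]. apply in_seq in Hi.
    apply NNPP; intro Hni. apply Hn. exists i; split; auto; lia. }
  apply NoDup_incl_length in H. rewrite length_map, length_seq in H. unfold Tag in *; lia.
  apply NoDup_map_NoDup_ForallPairs. intros x y _ _ E; congruence. apply seq_NoDup.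
Qed.

End Constr.

Section EF.
Context {I J : Type} (M : Kripke I J) (w : world M) (q : nat).
Notation tg a := (fst (proj1_sig a)).
Notation vv a := (snd (proj1_sig a)).
Notation U := (U M w q).
Notation UW := (UW M w q).
Notation Inv := (Inv M w q).

Lemma step b1 b2 k e1 e2 x (a1 : UW b1) : S k <= q -> Inv b1 b2 (S k) e1 e2 ->
  exists a2 : UW b2, Inv b1 b2 k (upd e1 x a1) (upd e2 x a2).
Proof.
  intros Hk Hinv. pose proof (pow_facts q k Hk) as [P1 [P2 P3]].
  destruct Hinv as [H1 [H2 [H3 [H4 [L1 [L2 [LA [LB LC]]]]]]]].
  destruct (classic (exists n, n <> x /\ reach (U b1) (e1 n) (2^k) a1)) as [[n [Hnx Hr]]|Hfar].
  -
    pose proof (reachU_tag _ _ _ _ _ _ _ Hr) as Ht.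
    pose proof (reachU_P _ _ _ _ _ _ _ Hr) as HP1.
    assert (HP2 : reachP M (valid M w q b2 (tg (e2 n))) (vv (e2 n)) (2^k) (vv a1)).
    { rewrite <- H1. destruct (Kb b2 (tg (e2 n))) eqn:Ks.
      - apply reach_reachP_all; [|eapply reachP_reach; eauto].
        intros y; split; [apply (proj1 (proj2_sig (e2 n)))|auto].
      - destruct (Kb b1 (tg (e1 n))) eqn:K1.
        + destruct (H2 n) as [E|Hd]; [congruence|].
          eapply reachP_weak; [|eapply (reach_deep M w q); [exact Hd| eapply reachP_reach; eauto| lia]].
          intros y Hy; split; [apply (proj1 (proj2_sig (e2 n)))|auto].
        + eapply reachP_weak; [|exact HP1]. intros y [_ [Hy|Hy]]; [congruence|].
          split; [apply (proj1 (proj2_sig (e2 n)))|auto]. }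
    pose proof (reachP_end _ _ _ _ _ HP2) as pv.
    pose (a2 := exist _ (tg (e2 n), vv a1) pv : UW b2).
    assert (HR2 : reach (U b2) (e2 n) (2^k) a2) by (apply reachP_U'; auto).
    exists a2. split; [|split; [|split; [|split]]].
    + intros m; destruct (Nat.eq_dec m x) as [->|Hm];
        [rewrite !upd_eq; reflexivity| rewrite !upd_neq by auto; auto].
    + intros m; destruct (Nat.eq_dec m x) as [->|Hm].
      * rewrite !upd_eq. simpl.
        destruct (Bool.bool_dec (Kb b1 (tg a1)) (Kb b2 (tg (e2 n)))) as [E|E]; [left; auto|right].
        rewrite <- Ht in E. destruct (H2 n) as [E'|Hd]; [contradiction|].
        eapply reach_mono; [eapply reach_trans; [exact Hd|eapply reachP_reach; eauto]|lia].
      * rewrite !upd_neq by auto. destruct (H2 m); [left; auto|right].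
        eapply reach_mono; eauto; lia.
    + intros n' m'.
      destruct (Nat.eq_dec n' x) as [->|Hn']; destruct (Nat.eq_dec m' x) as [->|Hm'];
        rewrite ?upd_eq, ?upd_neq by auto; intros H; auto; simpl.
      * apply H3. eapply reach_mono; [eapply reach_trans; [exact Hr|exact H]|lia].
      * symmetry; apply H3. eapply reach_mono;
          [eapply reach_trans; [exact Hr|apply reach_sym; exact H]|lia].
      * apply H3. eapply reach_mono; eauto; lia.
    + intros n' m'.
      destruct (Nat.eq_dec n' x) as [->|Hn']; destruct (Nat.eq_dec m' x) as [->|Hm'];
        rewrite ?upd_eq, ?upd_neq by auto; intros H; auto.
      * rewrite <- Ht. apply H4. eapply reach_mono; [eapply reach_trans; [exact HR2|exact H]|lia].
      * rewrite <- Ht. symmetry. apply H4. eapply reach_mono;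
          [eapply reach_trans; [exact HR2|apply reach_sym; exact H]|lia].
      * apply H4. eapply reach_mono; eauto; lia.
    + exists (tg a1 :: L1), (tg a2 :: L2). simpl. split; [lia|split; [lia|]].
      intros m; destruct (Nat.eq_dec m x) as [->|Hm];
        rewrite ?upd_eq, ?upd_neq by auto; [simpl; auto|].
      split; right; apply LC.
  -
    assert (HL2 : length L2 <= q) by (unfold Tag in *; lia).
    destruct (fresh q L2 (Kb b1 (tg a1)) HL2) as [i [Hi Hni]].
    assert (pv : valid M w q b2 (Some (Kb b1 (tg a1), i)) (vv a1))
      by (split; [exact Hi| exact (proj2 (proj2_sig a1))]).
    pose (a2 := exist _ (Some (Kb b1 (tg a1), i), vv a1) pv : UW b2).
    exists a2. split; [|split; [|split; [|split]]].
    + intros m; destruct (Nat.eq_dec m x) as [->|Hm];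
        [rewrite !upd_eq; reflexivity| rewrite !upd_neq by auto; auto].
    + intros m; destruct (Nat.eq_dec m x) as [->|Hm].
      * rewrite !upd_eq. left; reflexivity.
      * rewrite !upd_neq by auto. destruct (H2 m); [left; auto|right].
        eapply reach_mono; eauto; lia.
    + intros n' m'.
      destruct (Nat.eq_dec n' x) as [->|Hn']; destruct (Nat.eq_dec m' x) as [->|Hm'];
        rewrite ?upd_eq, ?upd_neq by auto; intros H; auto.
      * exfalso; apply Hfar; exists m'; split; auto; apply reach_sym; auto.
      * exfalso; apply Hfar; exists n'; split; auto.
      * apply H3. eapply reach_mono; eauto; lia.
    + intros n' m'.
      destruct (Nat.eq_dec n' x) as [->|Hn']; destruct (Nat.eq_dec m' x) as [->|Hm'];
        rewrite ?upd_eq, ?upd_neq by auto; intros H; auto.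
      * exfalso. apply reachU_tag in H. apply Hni. simpl in H. rewrite H. apply LC.
      * exfalso. apply reachU_tag in H. apply Hni. simpl in H. rewrite <- H. apply LC.
      * apply H4. eapply reach_mono; eauto; lia.
    + exists (tg a1 :: L1), (tg a2 :: L2). simpl. split; [lia|split; [lia|]].
      intros m; destruct (Nat.eq_dec m x) as [->|Hm];
        rewrite ?upd_eq, ?upd_neq by auto; [simpl; auto|].
      split; right; apply LC.
Qed.

End EF.

Section EF2.
Context {I J : Type} (M : Kripke I J) (w : world M) (q : nat).
Notation tg a := (fst (proj1_sig a)).
Notation vv a := (snd (proj1_sig a)).
Notation U := (U M w q).
Notation UW := (UW M w q).
Notation Inv := (Inv M w q).

Lemma ef (phi : form I J) : forall k b1 b2 e1 e2, qrank phi <= k -> k <= q ->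
  Inv b1 b2 k e1 e2 -> (holds (U b1) e1 phi <-> holds (U b2) e2 phi).
Proof.
  induction phi; intros k b1 b2 e1 e2 Hq Hk Hinv; simpl in Hq |- *.
  - destruct Hinv as [H1 [H2 [H3 [H4 _]]]].
    assert (P : 1 <= 2^k) by (pose proof (Nat.pow_nonzero 2 k); lia).
    rewrite !H1. split; intros [Ht Hr]; split; auto.
    + apply H3. eapply reach_mono; [|exact P]. eapply reachS; [constructor|].
      exists i; left; split; auto. rewrite !H1; auto.
    + apply H4. eapply reach_mono; [|exact P]. eapply reachS; [constructor|].
      exists i; left; split; auto.
  - destruct Hinv as [H1 _]. rewrite H1; tauto.
  - destruct Hinv as [H1 [H2 [H3 [H4 _]]]]. split; intros E.
    + apply UW_eq; [apply H3; rewrite E; constructor| rewrite <- !H1, E; auto].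
    + apply UW_eq; [apply H4; rewrite E; constructor| rewrite !H1, E; auto].
  - tauto.
  - rewrite (IHphi k b1 b2 e1 e2); auto; tauto.
  - rewrite (IHphi1 k b1 b2 e1 e2), (IHphi2 k b1 b2 e1 e2); auto; try tauto; lia.
  - rewrite (IHphi1 k b1 b2 e1 e2), (IHphi2 k b1 b2 e1 e2); auto; try tauto; lia.
  - rewrite (IHphi1 k b1 b2 e1 e2), (IHphi2 k b1 b2 e1 e2); auto; try tauto; lia.
  - destruct k as [|k]; [lia|]. split; intros [v Hv].
    + destruct (step M w q b1 b2 k e1 e2 n v Hk Hinv) as [a2 Ha2].
      exists a2. apply (IHphi k b1 b2 _ _ ltac:(lia) ltac:(lia) Ha2); auto.
    + destruct (step M w q b2 b1 k e2 e1 n v Hk (Inv_sym _ _ _ _ _ _ _ _ Hinv)) as [a1 Ha1].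
      exists a1. apply (IHphi k b1 b2 _ _ ltac:(lia) ltac:(lia) (Inv_sym _ _ _ _ _ _ _ _ Ha1)); auto.
  - destruct k as [|k]; [lia|]. split; intros Hv v.
    + destruct (step M w q b2 b1 k e2 e1 n v Hk (Inv_sym _ _ _ _ _ _ _ _ Hinv)) as [a1 Ha1].
      apply (IHphi k b1 b2 _ _ ltac:(lia) ltac:(lia) (Inv_sym _ _ _ _ _ _ _ _ Ha1)); auto.
    + destruct (step M w q b1 b2 k e1 e2 n v Hk Hinv) as [a2 Ha2].
      apply (IHphi k b1 b2 _ _ ltac:(lia) ltac:(lia) Ha2); auto.
Qed.

Definition a0 : UW true := exist _ (None, w) (conj Logic.I (or_introl eq_refl)).
Definition bb0 : UW false := exist _ (None, w) (conj Logic.I (or_intror (reach0 M w _))).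

Lemma Inv0 : Inv true false q (fun _ => a0) (fun _ => bb0).
Proof.
  split; [reflexivity|]. split; [intros; right; rewrite Nat.sub_diag; constructor|].
  split; [reflexivity|]. split; [reflexivity|].
  exists [None], [None]. simpl. split; [lia|split; [lia|]]. auto.
Qed.

Lemma ef0 (phi : form I J) : qrank phi <= q -> (sat (U true) phi a0 <-> sat (U false) phi bb0).
Proof. intros Hq. apply (ef phi q); auto. apply Inv0. Qed.

Lemma bis1 : gbisimilar M w (U true) a0.
Proof.
  exists (fun v (a : UW true) => proj1_sig a = (None, v)). split; [|reflexivity].
  split; [exists w, a0; reflexivity|]. intros u u' Z.
  assert (Eu : vv u' = u) by (rewrite Z; reflexivity).
  assert (Tu : tg u' = None) by (rewrite Z; reflexivity).
  split; [intros j; simpl; rewrite Eu; tauto|]. split.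
  - intros i vs _ Hnd Hf.
    apply (transfer (fun v (a : UW true) => proj1_sig a = (None, v)) (rel M i u) (rel (U true) i u')); auto.
    + intros a Ha. exists (exist _ (None, a) (conj Logic.I (or_introl eq_refl)) : UW true).
      split; [simpl; rewrite Eu; auto|reflexivity].
    + intros a a' b E E'. rewrite E in E'. congruence.
  - intros i vs' _ Hnd Hf.
    destruct (transfer (fun (b : UW true) v => proj1_sig b = (None, v)) (rel (U true) i u') (rel M i u))
      with (l := vs') as [vs [N1 [F1 F2]]]; auto.
    + intros b [Hb1 Hb2]. exists (vv b). split; [rewrite <- Eu; auto|].
      rewrite <- Tu, Hb1. apply surjective_pairing.
    + intros b b' a E E'. apply UW_eq; congruence.
    + exists vs; split; auto; split; auto. apply Forall2_flip; auto.
Qed.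

Lemma bis2 : gbisimilar (restrict M w (2^q-1)) (restrict_root M w (2^q-1)) (U false) bb0.
Proof.
  exists (fun (r : world (restrict M w (2^q-1))) (a : UW false) => proj1_sig a = (None, proj1_sig r)).
  split; [|reflexivity].
  split; [exists (restrict_root M w (2^q-1)), bb0; reflexivity|]. intros u u' Z.
  assert (Eu : vv u' = proj1_sig u) by (rewrite Z; reflexivity).
  assert (Tu : tg u' = None) by (rewrite Z; reflexivity).
  split; [intros j; simpl; rewrite Eu; tauto|]. split.
  - intros i vs _ Hnd Hf.
    apply (transfer (fun (r : world (restrict M w (2^q-1))) (a : UW false) => proj1_sig a = (None, proj1_sig r)) (rel (restrict M w (2^q-1)) i u) (rel (U false) i u')); auto.
    + intros a Ha. exists (exist _ (None, proj1_sig a) (conj Logic.I (or_intror (proj2_sig a))) : UW false).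
      split; [simpl; rewrite Eu; auto|reflexivity].
    + intros [a pa] [a' pa'] b E E'. rewrite E in E'. simpl in E'. inversion E'; subst.
      f_equal; apply proof_irrelevance.
  - intros i vs' _ Hnd Hf.
    destruct (transfer (fun (b : UW false) (r : world (restrict M w (2^q-1))) => proj1_sig b = (None, proj1_sig r))
       (rel (U false) i u') (rel (restrict M w (2^q-1)) i u))
      with (l := vs') as [vs [N1 [F1 F2]]]; auto.
    + intros b [Hb1 Hb2].
      assert (Hr : reach M w (2^q-1) (vv b)).
      { destruct (proj2_sig b) as [_ [E|E]]; auto. rewrite <- Hb1, Tu in E. discriminate. }
      exists (exist _ (vv b) Hr : world (restrict M w (2^q-1))). split; [simpl; rewrite <- Eu; auto|].
      simpl. rewrite <- Tu, Hb1. apply surjective_pairing.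
    + intros b b' a E E'. apply UW_eq; congruence.
    + exists vs; split; auto; split; auto. apply Forall2_flip; auto.
Qed.

Lemma finU b0 : finite_kripke M -> finite_kripke (U b0).
Proof.
  intros [lM HM]. apply fin_sig.
  exists (list_prod (None :: map (fun i => Some (true, i)) (seq 0 (S q)) ++
                              map (fun i => Some (false, i)) (seq 0 (S q))) lM).
  intros [t v] [Ht _]. apply in_prod; auto. destruct t as [[b i]|]; [|left; auto].
  right. apply in_or_app. simpl in Ht.
  assert (In i (seq 0 (S q))) by (apply in_seq; lia).
  destruct b; [left|right]; apply in_map_iff; exists i; split; auto.
Qed.

Lemma finR : finite_kripke M -> finite_kripke (restrict M w (2^q-1)).
Proof. intros [lM HM]. apply fin_sig. exists lM; auto. Qed.

End EF2.

Theorem mainTheorem7 :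
  forall (I J : Type), finite_type I -> finite_type J ->
  forall (phi : form I J) (q : nat),
    qrank phi <= q ->
    (forall y, free_in phi y -> y = 0) ->
    let l := 2 ^ q - 1 in
    (* invariance on all pointed Kripke structures *)
    ((forall (M : Kripke I J) (w : world M) (M' : Kripke I J) (w' : world M'),
        gbisimilar M w M' w' -> (sat M phi w <-> sat M' phi w')) ->
     forall (M : Kripke I J) (w : world M),
       tree_like M w l ->
       (sat M phi w <-> sat (restrict M w l) phi (restrict_root M w l)))
    /\
    (* invariance on finite pointed Kripke structures *)
    ((forall (M : Kripke I J) (w : world M) (M' : Kripke I J) (w' : world M'),
        finite_kripke M -> finite_kripke M' ->
        gbisimilar M w M' w' -> (sat M phi w <-> sat M' phi w')) ->
     forall (M : Kripke I J) (w : world M),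
       finite_kripke M -> tree_like M w l ->
       (sat M phi w <-> sat (restrict M w l) phi (restrict_root M w l))).
Proof.
  intros I J _ _ phi q Hq _ l. subst l. split.
  - intros Hinv M w _.
    rewrite (Hinv M w (U M w q true) (a0 M w q) (bis1 M w q)).
    rewrite (ef0 M w q phi Hq).
    symmetry. apply Hinv. apply bis2.
  - intros Hinv M w Hfin _.
    rewrite (Hinv M w (U M w q true) (a0 M w q) Hfin (finU M w q true Hfin) (bis1 M w q)).
    rewrite (ef0 M w q phi Hq).
    symmetry. apply Hinv; [apply finR; auto| apply finU; auto| apply bis2].
Qed.
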